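(* Let $n$ be a positive integer, and consider the one-way communication problem ''evaluate $f$ with domain $[n]$ on $0$''. Let $\mathcal{P}$ be any protocol for this problem in which Bob always outputs the correct answer. Then there is some input on which Alice's message in $\mathcal{P}$ contains at least $n\log_2 n$ bits.
   Context: Notation: $[n]=\{0,\dots,n-1\}$. The communication problem ''evaluate $f$ with domain $[n]$ on $0$'' is set up as follows. Let $k_0,\dots,k_{n-1}$ be any permutation of $[n]$, and let $v_0,\dots,v_{n-1}$ be any sequence of elements of $[n]$. These two sequences represent the function $f$ with $f(k_i)=v_i$. - Alice knows $v_0,\dots,v_{n-1}$, and Bob knows $k_0,\dots,k_{n-1}$. - Alice sends a single message to Bob, which may depend only on her input. - Bob, using the message and his own input, must output the $v_j$ such that $k_j=0$. *)

(* Defs.v *)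
From Stdlib Require Import Reals.
From mathcomp Require Import all_boot all_fingroup.
Set Implicit Arguments. Unset Strict Implicit. Unset Printing Implicit Defensive.

(* Alice's input: the values v_0..v_{n-1}, i.e. a function [n] -> [n].
   Bob's input: the keys k_0..k_{n-1}, a permutation of [n] (i |-> k_i).
   A message is a finite bit string. *)
Definition alice_input (n : nat) := {ffun 'I_n -> 'I_n}.
Definition bob_input (n : nat) := {perm 'I_n}.
Definition message := seq bool.

(* Messages are
   required to form a prefix-free code (Bob must be able to tell where the
   message ends); this includes fixed-length messages as a special case. *)
Record protocol (n : nat) := Protocol {
  alice : alice_input n -> message;
  bob : bob_input n -> message -> 'I_n;
  alice_prefix_free : forall v v' : alice_input n,
      prefix (alice v) (alice v') -> alice v = alice v'
}.

Definition always_correct (n : nat) (P : protocol n) : Prop :=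
  forall (v : alice_input n) (k : bob_input n) (j : 'I_n),
    nat_of_ord (k j) = 0%N -> bob P k (alice P v) = v j.

Definition log2 (x : R) : R := Rdiv (ln x) (ln (INR 2)).

(* Main.v *)
Require Import Defs.
From Stdlib Require Import Reals Lra.
From mathcomp Require Import all_boot all_fingroup.

Lemma INR_expn (m k : nat) : INR (expn m k) = Rpow_def.pow (INR m) k.
Proof.
elim: k => [|k IH]; first by rewrite expn0.
by rewrite expnS mult_INR IH /=.
Qed.

Lemma alice_inj (n : nat) (Hn : (0 < n)%N) (P : protocol n) :
  always_correct P -> injective (alice P).
Proof.
move=> H v v' E; apply/ffunP => j.
have Hk : nat_of_ord ((tperm j (Ordinal Hn) : bob_input n) j) = 0%N by rewrite tpermL.
by rewrite -(H v _ _ Hk) -(H v' _ _ Hk) E.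
Qed.

Theorem lemma1 (n : nat) (Hn : (0 < n)%N) (P : protocol n) :
  always_correct P ->
  exists v : alice_input n,
    Rle (Rmult (INR n) (log2 (INR n))) (INR (size (alice P v))).
Proof.
move=> Hc.
pose v0 : alice_input n := [ffun _ => Ordinal Hn].
pose vm := [arg max_(v > v0) size (alice P v)].
have Hmax : forall v, (size (alice P v) <= size (alice P vm))%N.
  rewrite /vm; case: arg_maxnP => // w _ Hw v; exact: Hw.
set L := size (alice P vm).
pose ext (v : alice_input n) : seq bool := alice P v ++ nseq (L - size (alice P v)) false.
have Hsz : forall v, size (ext v) == L.
  move=> v; rewrite size_cat size_nseq subnKC //; exact: Hmax.
pose extt (v : alice_input n) : L.-tuple bool := Tuple (Hsz v).
have Hinj : injective extt.
  move=> v v' /(congr1 val) /= E.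
  have AI := @alice_inj n Hn P Hc; apply: AI.
  wlog le : v v' E / (size (alice P v) <= size (alice P v'))%N.
    move=> W; case: (leqP (size (alice P v)) (size (alice P v'))) => h.
      exact: W.
    by apply/esym/W => //; apply: ltnW.
  apply: alice_prefix_free; rewrite prefixE.
  have : take (size (alice P v)) (ext v) = take (size (alice P v)) (ext v') by rewrite E.
  rewrite /ext !take_cat ltnn subnn take0 cats0.
  case: ltnP => h2.
    by move=> <-.
  have -> : size (alice P v) = size (alice P v') by apply/eqP; rewrite eqn_leq le h2.
  by rewrite subnn take0 cats0 take_size => ->.
have Hc2 := @leq_card _ _ extt Hinj.
rewrite card_ffun card_tuple !card_ord card_bool in Hc2.
exists vm.
have Hr : Rle (INR (expn n n)) (INR (expn 2 L)) by apply: le_INR; apply/leP.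
rewrite !INR_expn in Hr.
have n0 : Rlt 0 (INR n) by apply: lt_0_INR; apply/ltP.
have e2 : INR 2 = IZR 2%Z by simpl; lra.
have l2 : Rlt 0 (ln (INR 2)) by rewrite e2; have := ln_lt_2; lra.
have Hl : Rle (ln (Rpow_def.pow (INR n) n)) (ln (Rpow_def.pow (INR 2) L)).
  case: (Rle_lt_or_eq_dec _ _ Hr) => h; last by rewrite h; lra.
  apply: Rlt_le; apply: ln_increasing => //; exact: pow_lt.
rewrite !ln_pow // in Hl; last by simpl; lra.
rewrite /log2 /Rdiv -Rmult_assoc.
apply (Rmult_le_reg_r (ln (INR 2))) => //.
rewrite Rmult_assoc Rinv_l; last lra.
rewrite Rmult_1_r; exact: Hl.
Qed.
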